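(* Let $A=kQ/I$ be a nondegenerate dimer algebra on a torus with center $Z$, and let $\psi:A\to A'$ be a cyclic contraction. Then for each $i\in Q_0$, $\bar\tau\psi(Ze_i)\subseteq R$.
   Context: Let $k$ be an algebraically closed field. A dimer quiver is a finite quiver $Q$ (vertices $Q_0$, arrows $Q_1$, head/tail $\operatorname{h},\operatorname{t}$) whose underlying graph embeds in a real two-torus so that each connected component of the complement is simply connected and bounded by an oriented cycle (a unit cycle). The dimer algebra is $A=kQ/I$, $I$ generated by all $p-q$ with $p,q$ paths such that for some arrow $a$ both $pa$ and $qa$ are unit cycles. Perfect matching: $D\subseteq Q_1$ meeting each unit cycle in exactly one arrow; nondegenerate: every arrow in some perfect matching. Simple matching: perfect matching $D$ such that the subquiver with arrows $Q_1\setminus D$ contains a cycle through every vertex. Cancellative: no paths $p\neq q$ of $A$ and path $r$ with $rp=rq\neq0$ or $pr=qr\neq0$. For a dimer algebra $A'=kQ'/I'$ with simple matchings $\mathcal{S}'$, $\tau:A'\to M_{|Q'_0|}(k[x_D:D\in\mathcal{S}'])$ is the algebra map with $\tau(e_i)=E_{ii}$, $\tau(a)=\big(\prod_{D\in\mathcal{S}',a\in D}x_D\big)E_{\operatorname{h}(a),\operatorname{t}(a)}$; $\bar\tau(p)$ is given by $\tau(p)=\bar\tau(p)E_{ji}$ for $p\in e_jA'e_i$, extended $k$-linearly. A contraction $\psi:A\to A'$: $A'=kQ'/I'$ is a dimer algebra with $Q'$ obtained from $Q$ by contracting a set of arrows $Q_1^*\subseteq Q_1$ to vertices, the induced map $kQ\to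 kQ'$ sending $I$ into $I'$ and inducing $\psi$. It is cyclic if $A'$ is cancellative and $k[\cup_{i\in Q_0}\bar\tau\psi(e_iAe_i)]=k[\cup_{i\in Q'_0}\bar\tau(e_iA'e_i)]$. $R:=k[\cap_{i\in Q_0}\bar\tau\psi(e_iAe_i)]$ (isomorphic to the center of the homotopy algebra of $A$). *)

(* Defs.v *)
From HB Require Import structures.
From mathcomp Require Import all_boot all_order all_algebra all_fingroup.
From mathcomp Require Import mpoly.
From Stdlib Require Import ClassicalDescription.

Set Implicit Arguments.
Unset Strict Implicit.
Unset Printing Implicit Defensive.

Import GRing.Theory.
Local Open Scope ring_scope.

(* A quiver (finite vertex type, finite arrow type, head/tail) embedded in  *)
(* a two-torus with every complementary region an open disc bounded by an  *)
(* oriented cycle (a unit cycle) is encoded by the standard combinatorial   *)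
(* (ribbon-graph) data: every arrow lies on the boundary of exactly one     *)
(* positively oriented unit cycle and one negatively oriented unit cycle;   *)
(* [pos a] ([neg a]) is the arrow following [a] along that boundary.  The   *)
(* unit cycles are the orbits of [pos] and [neg].  The CW-complex obtained  *)
(* by gluing the unit-cycle discs is a closed surface iff the link of every *)
(* vertex is connected, it is connected iff the quiver is connected, it is  *)
(* orientable by construction, and it is a torus iff its Euler             *)
(* characteristic V - E + F vanishes.                                       *)

(* the vertex at which an arrow-end sits: (a,true) = head end, (a,false) = tail end *)
Definition end_vertex (V E : Type) (hd tl : E -> V) (x : E * bool) : V :=
  if x.2 then hd x.1 else tl x.1.

(* two arrow-ends at a vertex are adjacent when they form a corner of a unit cycle *)
Definition corner_rel (E : finType) (sp sm : E -> E) : rel (E * bool) :=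
  fun x y =>
    match x, y with
    | (a, true), (b, false) => (b == sp a) || (b == sm a)
    | (b, false), (a, true) => (b == sp a) || (b == sm a)
    | _, _ => false
    end.

Definition und_adj (V E : finType) (hd tl : E -> V) (S : {set E}) : rel V :=
  fun u v => [exists a in S, ((tl a == u) && (hd a == v)) || ((hd a == u) && (tl a == v))].

Record dimer_quiver := DimerQuiver {
  dq_vert : finType;
  dq_arr : finType;
  dq_hd : dq_arr -> dq_vert;
  dq_tl : dq_arr -> dq_vert;
  dq_pos : {perm dq_arr};
  dq_neg : {perm dq_arr};
  dq_pos_comp : forall a, dq_tl (dq_pos a) = dq_hd a;
  dq_neg_comp : forall a, dq_tl (dq_neg a) = dq_hd a;
  dq_nonempty : (0 < #|dq_vert|)%N;
  dq_link : forall x y : dq_arr * bool,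
      end_vertex dq_hd dq_tl x = end_vertex dq_hd dq_tl y ->
      connect (corner_rel dq_pos dq_neg) x y;
  dq_connected : forall u v : dq_vert, connect (und_adj dq_hd dq_tl setT) u v;
  dq_torus : (#|dq_vert| + #|porbits dq_pos| + #|porbits dq_neg| = #|dq_arr|)%N
}.

Arguments dq_hd {d}.
Arguments dq_tl {d}.

Section Paths.
Variable Q : dimer_quiver.

(* A path is (tail vertex, arrows in order of traversal); the trivial path
   at i is (i, [::]) = e_i. *)
Definition qpath := (dq_vert Q * seq (dq_arr Q))%type.

Definition ptail (p : qpath) : dq_vert Q := p.1.
Definition phead (p : qpath) : dq_vert Q := last p.1 (map dq_hd p.2).
Definition valid_path (p : qpath) : bool :=
  map dq_tl p.2 == belast p.1 (map dq_hd p.2).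
Definition vertices_on (p : qpath) : seq (dq_vert Q) := p.1 :: map dq_hd p.2.

(* composition, right-to-left: [pcomp p q] is "p q" = first q, then p *)
Definition pcomp (p q : qpath) : qpath := (q.1, q.2 ++ p.2).

Definition epath (i : dq_vert Q) : qpath := (i, [::]).

(* the path p such that p a is the positive (resp. negative) unit cycle
   containing a (starting with a) *)
Definition upos (a : dq_arr Q) : qpath :=
  (dq_hd a, behead (traject (dq_pos Q) a #|porbit (dq_pos Q) a|)).
Definition uneg (a : dq_arr Q) : qpath :=
  (dq_hd a, behead (traject (dq_neg Q) a #|porbit (dq_neg Q) a|)).

End Paths.

(* The path algebra kQ (finite formal k-linear combinations of paths),      *)
(* the ideal I, and the dimer algebra A = kQ/I (elements represented in kQ) *)
Section PathAlgebra.
Variable k : fieldType.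
Variable Q : dimer_quiver.

Definition kQ := seq (k * qpath Q).

Definition kQ_valid (x : kQ) : bool := all (fun u => valid_path u.2) x.

Definition coef (x : kQ) (p : qpath Q) : k := \sum_(u <- x | u.2 == p) u.1.

Definition kpath (p : qpath Q) : kQ := [:: (1, p)].

Definition ksub (x y : kQ) : kQ := x ++ [seq (- u.1, u.2) | u <- y].

Definition kmul (x y : kQ) : kQ :=
  flatten [seq [seq (u.1 * v.1, pcomp u.2 v.2) | v <- y & phead v.2 == ptail u.2]
          | u <- x].

Definition dimer_rel (a : dq_arr Q) : kQ := ksub (kpath (upos a)) (kpath (uneg a)).

Definition gen_term (g : k * qpath Q * dq_arr Q * qpath Q) : kQ :=
  kmul (kmul [:: (g.1.1.1, g.1.1.2)] (dimer_rel g.1.2)) (kpath g.2).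

Definition in_I (x : kQ) : Prop :=
  exists gs : seq (k * qpath Q * dq_arr Q * qpath Q),
    all (fun g => valid_path g.1.1.2 && valid_path g.2) gs /\
    forall p, coef x p = coef (flatten (map gen_term gs)) p.

Definition eqA (x y : kQ) : Prop := in_I (ksub x y).

Definition central (x : kQ) : Prop :=
  kQ_valid x /\ forall y, kQ_valid y -> eqA (kmul x y) (kmul y x).

Definition cancellative : Prop :=
  forall p q r : qpath Q, valid_path p -> valid_path q -> valid_path r ->
    ((eqA (kmul (kpath r) (kpath p)) (kmul (kpath r) (kpath q)) /\
      ~ in_I (kmul (kpath r) (kpath p))) -> eqA (kpath p) (kpath q)) /\
    ((eqA (kmul (kpath p) (kpath r)) (kmul (kpath q) (kpath r)) /\
      ~ in_I (kmul (kpath p) (kpath r))) -> eqA (kpath p) (kpath q)).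

End PathAlgebra.

Section Matchings.
Variable Q : dimer_quiver.

Definition perfect_matching (D : {set dq_arr Q}) : bool :=
  [forall O in porbits (dq_pos Q), #|O :&: D| == 1%N] &&
  [forall O in porbits (dq_neg Q), #|O :&: D| == 1%N].

Definition nondegenerate_dimer : Prop :=
  forall a : dq_arr Q, exists D, perfect_matching D && (a \in D).

Definition simple_matching (D : {set dq_arr Q}) : Prop :=
  perfect_matching D /\
  exists c : qpath Q,
    [/\ valid_path c, c.2 != [::], phead c = ptail c,
        all (fun a => a \notin D) c.2 &
        forall v, v \in vertices_on c].

Definition simpleb (D : {set dq_arr Q}) : bool :=
  if excluded_middle_informative (simple_matching D) then true else false.

Definition smatch := {D : {set dq_arr Q} | simpleb D}.

End Matchings.

Section Tau.
Variable k : fieldType.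
Variable Q : dimer_quiver.

Definition nsm := #|{: smatch Q}|.
Definition polyS := {mpoly k[nsm]}.

(* tau(a) = (prod_{D in S, a in D} x_D) E_{h(a),t(a)} *)
Definition tau_arrow (a : dq_arr Q) : polyS :=
  \prod_(D : smatch Q) (if a \in val D then 'X_(enum_rank D) else 1).

(* tau(p) = taubar(p) E_{h(p),t(p)} for a path p *)
Definition taubar_path (p : qpath Q) : polyS := \prod_(a <- p.2) tau_arrow a.

Definition taubar (x : kQ k Q) : polyS := \sum_(u <- x) u.1 *: taubar_path u.2.

End Tau.

Definition in_gen_alg (k : fieldType) (n : nat) (S : {mpoly k[n]} -> Prop)
    (f : {mpoly k[n]}) : Prop :=
  exists l : seq (k * seq {mpoly k[n]}),
    (forall u, u \in l -> forall g, g \in u.2 -> S g) /\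
    f = \sum_(u <- l) u.1 *: \prod_(g <- u.2) g.

(* Q' is obtained from Q by contracting the arrows of ct_arrs to vertices:  *)
(* vertices of Q' = vertices of Q modulo connectivity through contracted    *)
(* arrows (via ct_v), arrows of Q' = remaining arrows (via ct_a).           *)
Record contraction (Q Q' : dimer_quiver) := Contraction {
  ct_arrs : {set dq_arr Q};
  ct_v : dq_vert Q -> dq_vert Q';
  ct_a : dq_arr Q -> dq_arr Q';
  ct_v_surj : forall v' : dq_vert Q', exists v, ct_v v = v';
  ct_v_ker : forall u v, ct_v u = ct_v v <-> connect (und_adj dq_hd dq_tl ct_arrs) u v;
  ct_a_inj : {in ~: ct_arrs &, injective ct_a};
  ct_a_surj : forall a' : dq_arr Q', exists2 a, a \notin ct_arrs & ct_a a = a';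
  ct_hd : forall a, a \notin ct_arrs -> dq_hd (ct_a a) = ct_v (dq_hd a);
  ct_tl : forall a, a \notin ct_arrs -> dq_tl (ct_a a) = ct_v (dq_tl a)
}.

Section Contraction.
Variable k : fieldType.
Variables Q Q' : dimer_quiver.
Variable psi : contraction Q Q'.

Definition psi_path (p : qpath Q) : qpath Q' :=
  (ct_v psi p.1, [seq ct_a psi a | a <- p.2 & a \notin ct_arrs psi]).
Definition psi_kQ (x : kQ k Q) : kQ k Q' := [seq (u.1, psi_path u.2) | u <- x].

(* the induced map sends I into I' (so that it induces psi : A -> A') *)
Definition contraction_ideal : Prop :=
  forall x : kQ k Q, kQ_valid x -> in_I x -> in_I (psi_kQ x).

Definition taubarpsi (x : kQ k Q) : polyS k Q' := taubar (psi_kQ x).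

Definition at_vertex (G : dimer_quiver) (i : dq_vert G) (x : kQ k G) : bool :=
  all (fun u => valid_path u.2 && (ptail u.2 == i) && (phead u.2 == i)) x.

Definition img_psi (i : dq_vert Q) (f : polyS k Q') : Prop :=
  exists x, at_vertex i x /\ f = taubarpsi x.

Definition img' (i : dq_vert Q') (f : polyS k Q') : Prop :=
  exists x : kQ k Q', at_vertex i x /\ f = taubar x.

Definition cyclic_contraction : Prop :=
  cancellative k Q' /\
  forall f, in_gen_alg (fun g => exists i, img_psi i g) f <->
            in_gen_alg (fun g => exists i, img' i g) f.

Definition R_alg (f : polyS k Q') : Prop :=
  in_gen_alg (fun g => forall i, img_psi i g) f.

End Contraction.

(* Main.v *)
Require Import Defs.
From HB Require Import structures.
From mathcomp Require Import all_boot all_order all_algebra all_fingroup.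
From mathcomp Require Import mpoly.
From Stdlib Require Import ClassicalDescription.
Set Implicit Arguments.
Unset Strict Implicit.
Unset Printing Implicit Defensive.
Import GRing.Theory.
Local Open Scope ring_scope.
Local Notation pcomp := Defs.pcomp.

Section Gen.
Variable k : fieldType.
Variable n : nat.
Variable G : dimer_quiver.

Definition W (w : qpath G -> {mpoly k[n]}) (x : kQ k G) : {mpoly k[n]} :=
  \sum_(u <- x) u.1 *: w u.2.

Lemma W_cat w x y : W w (x ++ y) = W w x + W w y.
Proof. by rewrite /W big_cat. Qed.

Lemma W_ksub w x y : W w (ksub x y) = W w x - W w y.
Proof.
rewrite /ksub W_cat /W big_map /= -sumrN; congr (_ + _).
by apply: eq_bigr => u _; rewrite scaleNr.
Qed.

Lemma W_flatten w xs : W w (flatten xs) = \sum_(x <- xs) W w x.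
Proof. by rewrite /W big_flatten. Qed.

Lemma W_coefs w x (s : seq (qpath G)) : uniq s -> {subset map snd x <= s} ->
  W w x = \sum_(p <- s) coef x p *: w p.
Proof.
move=> us; elim: x => [|u x IH] sub.
  by rewrite /W big_nil big1 // => p _; rewrite /coef big_nil scale0r.
rewrite /W big_cons -/(W w x) IH; last by move=> p hp; apply: sub; rewrite inE hp orbT.
have us2 : u.2 \in s by apply: sub; rewrite inE eqxx.
rewrite (bigD1_seq u.2) //= [in RHS](bigD1_seq u.2) //= /coef !big_cons eqxx addrA.
rewrite scalerDl; congr (_ + _); apply: eq_bigr => p /negbTE hp.
by rewrite big_cons eq_sym hp.
Qed.

Lemma W_coef w x y : (forall p, coef x p = coef y p) -> W w x = W w y.
Proof.
move=> h.
have us := undup_uniq (map snd (x ++ y)).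
rewrite (@W_coefs w x _ us); last by move=> p hp; rewrite mem_undup map_cat mem_cat hp.
rewrite (@W_coefs w y _ us); last by move=> p hp; rewrite mem_undup map_cat mem_cat hp orbT.
by apply: eq_bigr => p _; rewrite h.
Qed.

Lemma W_kmul w x y : W w (kmul x y) =
  \sum_(u <- x) \sum_(v <- y)
     (if phead v.2 == ptail u.2 then (u.1 * v.1) *: w (pcomp u.2 v.2) else 0).
Proof.
rewrite /kmul W_flatten big_map; apply: eq_bigr => u _.
by rewrite /W big_map big_filter big_mkcond.
Qed.

Lemma phead_pcomp (p q : qpath G) : phead q == ptail p -> phead (pcomp p q) = phead p.
Proof. by move/eqP=> h; rewrite /phead /pcomp /= map_cat last_cat; move: h; rewrite /phead => ->. Qed.

Lemma ptail_pcomp (p q : qpath G) : ptail (pcomp p q) = ptail q.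
Proof. by []. Qed.

Lemma valid_pcomp (p q : qpath G) : valid_path p -> valid_path q ->
  phead q == ptail p -> valid_path (pcomp p q).
Proof.
rewrite /valid_path /Defs.pcomp /= => /eqP vp /eqP vq /eqP h.
by rewrite !map_cat belast_cat vp vq; move: h; rewrite /phead /ptail => ->.
Qed.

Lemma valid_kmul (x y : kQ k G) : kQ_valid x -> kQ_valid y -> kQ_valid (kmul x y).
Proof.
move=> /allP vx /allP vy; apply/allP => u /flattenP [s /mapP [u0 u0x ->]].
move=> /mapP [v]; rewrite mem_filter => /andP [c vin] -> /=.
by apply: valid_pcomp => //; [apply: vx | apply: vy].
Qed.

Lemma valid_ksub (x y : kQ k G) : kQ_valid x -> kQ_valid y -> kQ_valid (ksub x y).
Proof. by rewrite /kQ_valid /ksub all_cat all_map => -> ->. Qed.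

Definition hom (h t : dq_vert G) (x : kQ k G) :=
  all (fun u => (phead u.2 == h) && (ptail u.2 == t)) x.

Lemma hom_kmul h1 t1 h2 t2 x y : hom h1 t1 x -> hom h2 t2 y -> hom h1 t2 (kmul x y).
Proof.
move=> /allP hx /allP hy; apply/allP => u /flattenP [s /mapP [u0 u0x ->]].
move=> /mapP [v]; rewrite mem_filter => /andP [c vin] -> /=.
have /andP[/eqP a1 /eqP a2] := hx _ u0x.
have /andP[/eqP b1 /eqP b2] := hy _ vin.
by rewrite phead_pcomp // a1 -b2 !eqxx.
Qed.

Lemma W_hom (f : dq_vert G -> dq_vert G -> bool) w h t x : hom h t x ->
  W (fun p => if f (phead p) (ptail p) then w p else 0) x =
  if f h t then W w x else 0.
Proof.
rewrite /W; elim: x => [|u x IH] /=; first by rewrite !big_nil; case: ifP.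
move=> /andP [/andP [/eqP hu /eqP tu] hx]; rewrite !big_cons IH // hu tu.
by case: (f h t); rewrite ?scaler0 ?addr0.
Qed.

Lemma W_null_r w x y h t : (forall p q, w (pcomp p q) = w q * w p) ->
  hom h t y -> W w y = 0 -> W w (kmul x y) = 0.
Proof.
move=> wm hy wy; rewrite W_kmul big1 // => u _.
transitivity (\sum_(v <- y) (if h == ptail u.2 then u.1 *: ((v.1 *: w v.2) * w u.2) else 0)).
  rewrite big_seq [RHS]big_seq; apply: eq_bigr => v vy.
  have /andP[/eqP -> _] := allP hy v vy.
  by case: ifP => // _; rewrite wm -scalerA -mpoly_scaleAl.
case: (h == ptail u.2); last by rewrite big1.
by rewrite -scaler_sumr -mulr_suml -/(W w y) wy mul0r scaler0.
Qed.

Lemma W_null_l w x y h t : (forall p q, w (pcomp p q) = w q * w p) ->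
  hom h t y -> W w y = 0 -> W w (kmul y x) = 0.
Proof.
move=> wm hy wy; rewrite W_kmul exchange_big big1 // => u _ /=.
transitivity (\sum_(v <- y) (if phead u.2 == t then u.1 *: (w u.2 * (v.1 *: w v.2)) else 0)).
  rewrite big_seq [RHS]big_seq; apply: eq_bigr => v vy.
  have /andP[_ /eqP ->] := allP hy v vy.
  by case: ifP => // _; rewrite wm mulrC -scalerA scalerAr.
case: (phead u.2 == t); last by rewrite big1.
by rewrite -scaler_sumr -mulr_sumr -/(W w y) wy mulr0 scaler0.
Qed.

End Gen.

Section Orbit.
Variable G : dimer_quiver.
Variable s : {perm dq_arr G}.
Hypothesis hs : forall a, dq_tl (s a) = dq_hd a.

Lemma traject_valid m b :
  map dq_tl (traject s (s b) m) = belast (dq_hd b) (map dq_hd (traject s (s b) m)).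
Proof. by elim: m b => [|m IH] b //=; rewrite hs IH. Qed.

Lemma traject_last m b :
  last (dq_hd b) (map dq_hd (traject s (s b) m)) = dq_tl (iter m.+1 s b).
Proof.
elim: m b => [|m IH] b /=; first by rewrite hs.
by rewrite IH -iterSr.
Qed.

Definition ucyc (a : dq_arr G) : qpath G :=
  (dq_hd a, behead (traject s a #|porbit s a|)).

Lemma ucyc_valid a : valid_path (ucyc a).
Proof.
rewrite /ucyc /valid_path /=; have := card_porbit_neq0 s a.
by case: #|porbit s a| => [|N] //= _; rewrite traject_valid.
Qed.

Lemma ucyc_head a : phead (ucyc a) = dq_tl a.
Proof.
rewrite /ucyc /phead /=; have := card_porbit_neq0 s a; have := iter_porbit s a.
by case: #|porbit s a| => [|N] //= hit _; rewrite traject_last; congr dq_tl; rewrite -[RHS]hit.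
Qed.

Lemma ucyc_tail a : ptail (ucyc a) = dq_hd a.
Proof. by []. Qed.

Variable k : fieldType.

Lemma mpolyX_neq0 m (i : 'I_m) : ('X_i : {mpoly k[m]}) != 0.
Proof.
apply/eqP => h; have := @mcoeffXU m k i i; rewrite h mcoeff0 eqxx => /eqP.
by rewrite eq_sym oner_eq0.
Qed.

Lemma tau_arrow_neq0 (a : dq_arr G) : tau_arrow k a != 0.
Proof.
apply/prodf_neq0 => D _; case: ifP => _; first exact: mpolyX_neq0.
exact: oner_neq0.
Qed.

Lemma taubar_path_neq0 (p : qpath G) : taubar_path k p != 0.
Proof.
rewrite /taubar_path prodf_seq_neq0; apply/allP => a _; exact: tau_arrow_neq0.
Qed.

Hypothesis perf : forall D : smatch G, [forall O in porbits s, #|O :&: val D| == 1%N].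

Lemma ucyc_tau a : tau_arrow k a * taubar_path k (ucyc a) =
  \prod_(D : smatch G) 'X_(enum_rank D).
Proof.
have -> : tau_arrow k a * taubar_path k (ucyc a) =
    \prod_(b <- traject s a #|porbit s a|) tau_arrow k b.
  rewrite /taubar_path /ucyc /=; have := card_porbit_neq0 s a.
  by case: #|porbit s a| => [|N] //= _; rewrite big_cons.
rewrite big_uniq ?uniq_traject_porbit //.
rewrite (eq_bigl (fun b => b \in porbit s a)); last by move=> b; rewrite -porbit_traject.
rewrite /tau_arrow exchange_big /=; apply: eq_bigr => D _.
rewrite -big_mkcondr /=.
rewrite (eq_bigl (fun b => b \in porbit s a :&: val D)); last by move=> b; rewrite !inE.
rewrite prodr_const.
have /forall_inP h := perf D.
by rewrite (eqP (h _ _)) ?expr1 // imset_f.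
Qed.

End Orbit.

Lemma simple_perfect (G : dimer_quiver) (D : smatch G) : perfect_matching (val D).
Proof.
have := valP D; rewrite /simpleb; case: excluded_middle_informative => //.
by move=> [] .
Qed.

Section QVanish.
Variable k : fieldType.
Variable G : dimer_quiver.

Lemma tb_mul (p q : qpath G) :
  taubar_path k (pcomp p q) = taubar_path k q * taubar_path k p.
Proof. by rewrite /taubar_path /Defs.pcomp big_cat. Qed.

Lemma upos_ucyc (a : dq_arr G) : upos a = ucyc (dq_pos G) a. Proof. by []. Qed.
Lemma uneg_ucyc (a : dq_arr G) : uneg a = ucyc (dq_neg G) a. Proof. by []. Qed.

Lemma tb_rel (a : dq_arr G) : taubar_path k (upos a) = taubar_path k (uneg a).
Proof.
apply: (mulfI (tau_arrow_neq0 k a)).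
rewrite upos_ucyc uneg_ucyc !ucyc_tau // => D.
  by have /andP[_ h] := simple_perfect D.
by have /andP[h _] := simple_perfect D.
Qed.

Lemma hom_rel (a : dq_arr G) : hom (dq_tl a) (dq_hd a) (dimer_rel k a).
Proof.
rewrite /hom /dimer_rel /ksub /kpath /= upos_ucyc uneg_ucyc.
by rewrite !ucyc_head ?ucyc_tail ?eqxx //; [apply: dq_neg_comp | apply: dq_pos_comp].
Qed.

Lemma W_rel (a : dq_arr G) : W (@taubar_path k G) (dimer_rel k a) = 0.
Proof.
rewrite /dimer_rel W_ksub /W !big_seq1 /= !scale1r tb_rel; exact: subrr.
Qed.

Lemma W_gen g : W (@taubar_path k G) (gen_term g) = 0.
Proof.
rewrite /gen_term; apply: (@W_null_l _ _ _ _ _ _ (phead g.1.1.2) (dq_hd g.1.2)).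
- exact: tb_mul.
- apply: (hom_kmul (t1 := ptail g.1.1.2) _ (hom_rel _)).
  by rewrite /hom /= !eqxx.
apply: (@W_null_r _ _ _ _ _ _ (dq_tl g.1.2) (dq_hd g.1.2)).
- exact: tb_mul.
- exact: hom_rel.
exact: W_rel.
Qed.

Lemma taubar_I (y : kQ k G) : in_I y -> taubar y = 0.
Proof.
move=> [gs [_ h]]; have -> : taubar y = W (@taubar_path k G) y by [].
rewrite (W_coef _ h) W_flatten big_map.
by rewrite big1 // => g _; exact: W_gen.
Qed.

End QVanish.

Section Main.
Variable k : fieldType.
Variables Q Q' : dimer_quiver.
Variable psi : contraction Q Q'.
Hypothesis hI : contraction_ideal k psi.

Definition tp (p : qpath Q) : polyS k Q' := taubar_path k (psi_path psi p).

Lemma tp_mul (p q : qpath Q) : tp (pcomp p q) = tp q * tp p.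
Proof. by rewrite /tp /taubar_path /psi_path /= filter_cat map_cat big_cat. Qed.

Lemma tp_neq0 (p : qpath Q) : tp p != 0.
Proof. exact: taubar_path_neq0. Qed.

Lemma taubarpsiE x : taubarpsi psi x = W tp x.
Proof. by rewrite /taubarpsi /taubar /psi_kQ big_map. Qed.

Definition wf (f : dq_vert Q -> dq_vert Q -> bool) :=
  fun p => if f (phead p) (ptail p) then tp p else 0.

Lemma valid_gen (g : k * qpath Q * dq_arr Q * qpath Q) :
  valid_path g.1.1.2 -> valid_path g.2 -> kQ_valid (gen_term g).
Proof.
move=> vp vq; rewrite /gen_term; apply: valid_kmul; last by rewrite /kQ_valid /= vq.
apply: valid_kmul; first by rewrite /kQ_valid /= vp.
rewrite /dimer_rel /ksub /kpath /kQ_valid /= upos_ucyc uneg_ucyc !ucyc_valid //;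
  move=> b; first [exact: dq_pos_comp | exact: dq_neg_comp].
Qed.

Lemma hom_gen (g : k * qpath Q * dq_arr Q * qpath Q) :
  hom (phead g.1.1.2) (ptail g.2) (gen_term g).
Proof.
rewrite /gen_term; apply: (hom_kmul (t1 := dq_hd g.1.2) (h2 := phead g.2)); last by rewrite /hom /= !eqxx.
apply: (hom_kmul (t1 := ptail g.1.1.2) _ (hom_rel _ _)).
by rewrite /hom /= !eqxx.
Qed.

Lemma F2 f x : kQ_valid x -> in_I x -> W (wf f) x = 0.
Proof.
move=> vx [gs [vgs h]]; rewrite (W_coef _ h) W_flatten big_map big_seq big1 // => g gin.
have /andP[vp vq] := allP vgs g gin.
rewrite /wf (W_hom f tp (hom_gen g)); case: (f _ _) => //.
rewrite -taubarpsiE; apply: taubar_I; apply: hI; first exact: valid_gen.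
exists [:: g]; split; first by rewrite /= vp vq.
by move=> p; rewrite /= cats0.
Qed.

Variable z : kQ k Q.
Hypothesis cz : central z.

Lemma comm f (p : qpath Q) : valid_path p ->
  W (wf f) (kmul z (kpath k p)) = W (wf f) (kmul (kpath k p) z).
Proof.
move=> vp; case: cz => vz hz.
have vkp : kQ_valid (kpath k p) by rewrite /kQ_valid /= vp.
have e := hz _ vkp.
apply/eqP; rewrite -subr_eq0 -W_ksub; apply/eqP; apply: F2 => //.
by apply: valid_ksub; apply: valid_kmul.
Qed.

Lemma L1 f (p : qpath Q) : W (wf f) (kmul z (kpath k p)) =
  \sum_(u <- z) (if (phead p == ptail u.2) && f (phead u.2) (ptail p)
                 then u.1 *: (tp p * tp u.2) else 0).
Proof.
rewrite W_kmul; apply: eq_bigr => u _; rewrite big_seq1 /=.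
case: eqP => h //=.
rewrite /wf phead_pcomp; last by apply/eqP.
change (ptail (pcomp u.2 p)) with (ptail p).
by case: (f _ _); rewrite ?scaler0 // tp_mul mulr1.
Qed.

Lemma L2 f (p : qpath Q) : W (wf f) (kmul (kpath k p) z) =
  \sum_(u <- z) (if (phead u.2 == ptail p) && f (phead p) (ptail u.2)
                 then u.1 *: (tp u.2 * tp p) else 0).
Proof.
rewrite W_kmul big_seq1; apply: eq_bigr => u _ /=.
case: eqP => h //=.
rewrite /wf phead_pcomp; last by apply/eqP.
change (ptail (pcomp p u.2)) with (ptail u.2).
by case: (f _ _); rewrite ?scaler0 // tp_mul mul1r.
Qed.

Definition Dg j := \sum_(u <- z)
  (if (ptail u.2 == j) && (phead u.2 == j) then u.1 *: tp u.2 else 0).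

Lemma step_arrow (a : dq_arr Q) : Dg (dq_hd a) = Dg (dq_tl a).
Proof.
pose p : qpath Q := (dq_tl a, [:: a]).
have vp : valid_path p by rewrite /valid_path /= eqxx.
have := comm (fun h t => (h == dq_hd a) && (t == dq_tl a)) vp.
rewrite L1 L2.
have -> : phead p = dq_hd a by [].
have -> : ptail p = dq_tl a by [].
move=> e; apply: (mulIf (tp_neq0 p)).
rewrite /Dg !mulr_suml.
transitivity (\sum_(u <- z) (if (dq_hd a == ptail u.2) &&
     ((phead u.2 == dq_hd a) && (dq_tl a == dq_tl a)) then u.1 *: (tp p * tp u.2) else 0)).
  apply: eq_bigr => u _; rewrite eqxx andbT [dq_hd a == _]eq_sym.
  by case: ifP => _; rewrite ?mul0r // -mpoly_scaleAl mulrC.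
rewrite e; apply: eq_bigr => u _; rewrite eqxx /= andbC.
by case: ifP => _; rewrite ?mul0r // -mpoly_scaleAl.
Qed.

Lemma Dg_const i j : Dg i = Dg j.
Proof.
have := dq_connected i j; move/connectP => [s pth ->].
elim: s i pth => [|x s IH] i //= /andP [e pth]; rewrite -(IH _ pth).
move: e; rewrite /und_adj => /existsP [a /andP [_ /orP [/andP [/eqP t1 /eqP h1] | /andP [/eqP h1 /eqP t1]]]].
  by rewrite -t1 -h1 step_arrow.
by rewrite -t1 -h1 step_arrow.
Qed.

Lemma Off_zero i : \sum_(u <- z)
  (if (ptail u.2 == i) && (phead u.2 != i) then u.1 *: tp u.2 else 0) = 0.
Proof.
have vp : valid_path (epath i) by [].
have := comm (fun h t => (t == i) && (h != i)) vp.
rewrite L1 L2.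
have -> : phead (epath i) = i by [].
have -> : ptail (epath i) = i by [].
have -> : tp (epath i) = 1 by rewrite /tp /taubar_path /= big_nil.
rewrite [in X in _ = X]big1 => [e|u _]; last first.
  by rewrite eqxx /= !andbF.
apply: eq_trans _ e; apply: eq_bigr => u _; rewrite eqxx eq_sym mul1r.
by [].
Qed.

Lemma main_eq i : W tp (kmul z (kpath k (epath i))) = Dg i.
Proof.
transitivity (W (wf (fun _ _ => true)) (kmul z (kpath k (epath i)))); first by [].
rewrite L1.
have -> : tp (epath i) = 1 by rewrite /tp /taubar_path /= big_nil.
have -> : phead (epath i) = i by [].
rewrite -(addr0 (Dg i)) -[X in _ = _ + X](Off_zero i) /Dg -big_split; apply: eq_bigr => u _ /=.
rewrite andbT [i == _]eq_sym mul1r.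
case: (ptail u.2 == i); case: (phead u.2 == i) => /=; by rewrite ?addr0 ?add0r.
Qed.

End Main.

Theorem lemma3p14 (k : closedFieldType) (Q Q' : dimer_quiver)
    (psi : contraction Q Q') :
  nondegenerate_dimer Q ->
  contraction_ideal k psi ->
  cyclic_contraction k psi ->
  forall z : kQ k Q, central z ->
  forall i : dq_vert Q,
    R_alg psi (taubarpsi psi (kmul z (kpath k (epath i)))).
Proof.
move=> _ hI _ z cz i; rewrite /R_alg.
exists [:: (1, [:: taubarpsi psi (kmul z (kpath k (epath i)))])]; split; last first.
  by rewrite !big_seq1 scale1r.
move=> u; rewrite inE => /eqP -> g; rewrite inE => /eqP -> j.
exists (filter (fun u => (ptail u.2 == j) && (phead u.2 == j)) z); split.
  apply/allP => v; rewrite mem_filter => /andP [/andP [t h] vz].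
  by rewrite t h !andbT; exact: (allP cz.1 v vz).
rewrite !taubarpsiE (main_eq hI cz) (Dg_const hI cz i j).
by rewrite /W /Dg big_filter [RHS]big_mkcond.
Qed.
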